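(* Let $k\ge2$, $0<a<1$, $d\ge2$, and let $\{\eta_n\}_{n\ge0}\subset\mathbb{C}\setminus\{0\}$ satisfy $|\eta_n|\le a^{d^n}$ for all $n$. Let \[ F_n(z_1,\dots,z_k)=(\eta_n z_k,\ z_2^d+\eta_n z_1,\ \dots,\ z_k^d+\eta_n z_{k-1}). \] Let $R>1+a$, and for $1\le i\le k$ let $V_i=\{z\in\mathbb{C}^k:\|z\|_\infty=|z_i|\ge R\}$, and put $V^+=\bigcup_{i=2}^kV_i$. Then $F_n(V^+)\subset V^+$ for every $n\ge1$.
   Context: $\|z\|_\infty=\max_{1\le i\le k}|z_i|$. *)

(* Defs.v *)
From HB Require Import structures.
From mathcomp Require Import all_boot all_order all_algebra.
From mathcomp Require Import reals.
From mathcomp Require Import complex.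
Set Implicit Arguments. Unset Strict Implicit. Unset Printing Implicit Defensive.
Import Order.TTheory GRing.Theory Num.Theory.
Local Open Scope ring_scope.

(* Points of C^k are row vectors z : 'rV[R[i]]_k; the paper's coordinate
   z_j (1 <= j <= k) is z 0 (j-1) (0-based index). |w| is normc w : R. *)

Definition cabs (R : rcfType) (w : R[i]) : R := ComplexField.Normc.normc w.

Definition supn (R : realType) (k : nat) (z : 'rV[R[i]]_k) : R :=
  \big[Num.max/0]_(i < k) cabs (z 0 i).

Definition inV (R : realType) (k : nat) (Rr : R) (i : 'I_k) (z : 'rV[R[i]]_k) : Prop :=
  supn z = cabs (z 0 i) /\ Rr <= cabs (z 0 i).

(* V^+ = union of V_i for i = 2..k (1-based), i.e. 0-based i >= 1 *)
Definition inVplus (R : realType) (k : nat) (Rr : R) (z : 'rV[R[i]]_k) : Prop :=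
  exists i : 'I_k, (1 <= i)%N /\ inV Rr i z.

(* F_eta(z) = (eta z_k, z_2^d + eta z_1, ..., z_k^d + eta z_{k-1});
   ord_pred is the cyclic predecessor: 0 |-> k-1, i |-> i-1. *)
Definition Fmap (R : realType) (k d : nat) (eta : R[i]) (z : 'rV[R[i]]_k) : 'rV[R[i]]_k :=
  \row_(i < k) ((if val i == 0%N then 0 else z 0 i ^+ d) + eta * z 0 (ord_pred i)).

(* Main.v *)
Require Import Defs.
From HB Require Import structures.
From mathcomp Require Import all_boot all_order all_algebra.
From mathcomp Require Import reals.
From mathcomp Require Import complex.
From mathcomp Require Import ring lra.
Import Order.TTheory GRing.Theory Num.Theory.
Local Open Scope ring_scope.

Section Aux.
Context {R : realType}.

Lemma cabs_ge0 (x : R[i]) : 0 <= cabs x.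
Proof. by case: x => a b; rewrite /cabs /= sqrtr_ge0. Qed.

Lemma cabsM (x y : R[i]) : cabs (x * y) = cabs x * cabs y.
Proof. exact: ComplexField.Normc.normcM. Qed.

Lemma cabsX (x : R[i]) n : cabs (x ^+ n) = cabs x ^+ n.
Proof.
elim: n => [|n IH]; first by rewrite !expr0 /cabs ComplexField.Normc.normc1.
by rewrite !exprS cabsM IH.
Qed.

Lemma cabsD (x y : R[i]) : cabs (x + y) <= cabs x + cabs y.
Proof. exact: (@le_normcD R x y). Qed.

Lemma cabsD_ge (x y : R[i]) : cabs x - cabs y <= cabs (x + y).
Proof.
have h := cabsD (x + y) (- y).
have hN : cabs (- y) = cabs y by exact: (@normcN R y).
rewrite hN addrK in h; lra.
Qed.

Lemma supn_ge k (z : 'rV[R[i]]_k) j : cabs (z 0 j) <= supn z.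
Proof. by rewrite /supn (bigD1 j) //= le_max lexx. Qed.

Lemma supn_attained k (z : 'rV[R[i]]_k) :
  supn z = 0 \/ exists j, supn z = cabs (z 0 j).
Proof.
rewrite /supn; apply: (big_rec (fun x => x = 0 \/ exists j, x = cabs (z 0 j))).
  by left.
move=> j x _ [->|[j' ->]].
  have [h|h] := leP (cabs (z 0 j)) 0.
    by left.
  by right; exists j.
have [h|h] := leP (cabs (z 0 j)) (cabs (z 0 j')).
  by right; exists j'.
by right; exists j.
Qed.
End Aux.

Theorem lemma3p4 (R : realType) (k d : nat) (a Rr : R) (eta : nat -> R[i])
  (hk : (2 <= k)%N) (ha0 : 0 < a) (ha1 : a < 1) (hd : (2 <= d)%N)
  (heta0 : forall n, eta n != 0)
  (heta : forall n, cabs (eta n) <= a ^+ (d ^ n))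
  (hR : 1 + a < Rr) :
  forall n : nat, (1 <= n)%N ->
  forall z : 'rV[R[i]]_k, inVplus Rr z -> inVplus Rr (Fmap d (eta n) z).
Proof.
move=> n hn z [i [hi [hM hMR]]].
set M := cabs (z 0 i) in hM hMR.
have hea : cabs (eta n) <= a.
  apply: le_trans (heta n) _.
  have : (1 <= d ^ n)%N by rewrite expn_gt0; case: (d) hd.
  case: (d ^ n)%N => // m _.
  rewrite exprS -[X in _ <= X]mulr1; apply: ler_wpM2l; first exact: ltW.
  exact: exprn_ile1 (ltW ha0) (ltW ha1).
have he0 := cabs_ge0 (eta n).
have hzb : forall j, cabs (z 0 j) <= M by move=> j; rewrite -hM supn_ge.
set w := Fmap d (eta n) z.
have hw0 : forall j : 'I_k, val j = 0%N -> cabs (w 0 j) <= a * M.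
  move=> j hj; rewrite /w /Fmap mxE hj eqxx add0r cabsM.
  apply: ler_pM => //; first exact: cabs_ge0; exact: hzb.
have hwi : M <= cabs (w 0 i).
  rewrite /w /Fmap mxE.
  have -> : (val i == 0%N) = false by apply/negbTE; rewrite -lt0n.
  apply: le_trans (cabsD_ge _ _).
  rewrite cabsX cabsM.
  have hz' := hzb (ord_pred i); have hz0 := cabs_ge0 (z 0 (ord_pred i)).
  have hM2 : M ^+ 2 <= M ^+ d.
    rewrite -(subnKC hd) exprD -[X in X <= _]mulr1 ler_wpM2l ?exprn_ege1 //.
      by rewrite exprn_ge0 // ltW // (lt_le_trans _ hMR) //; lra.
    lra.
  have : cabs (eta n) * cabs (z 0 (ord_pred i)) <= a * M.
    by apply: ler_pM.
  rewrite expr2 in hM2.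
  have hMM : 0 <= M * (M - 1 - a).
    by apply: mulr_ge0; lra.
  have : M * (M - 1 - a) = M * M - M - a * M by ring.
  lra.
have hMpos : 1 < M by lra.
case: (supn_attained _ w) => [h0|[j hj]].
  have := supn_ge _ w i; rewrite h0; lra.
have hj1 : (1 <= j)%N.
  case: j hj => [[|j'] hj'] //= hj.
  have := hw0 (Ordinal hj') erefl; have := supn_ge _ w i.
  have haM : a * M < M.
    by rewrite -[X in _ < X]mul1r ltr_pM2r //; lra.
  rewrite hj; lra.
exists j; split => //; split => //.
rewrite -hj; apply: le_trans (supn_ge _ w i); lra.
Qed.
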